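(* Assume all struts are straight, and let $n\ge1$, $k\ge0$ be integers with $k\ge n-1$. If $\psi\in M_n$ satisfies $b(\Sigma,\psi)=0$ for all $\Sigma\in V_k$, then $\psi=0$; i.e. $\operatorname{Ker}B_h^T=\{0\}$.
   Context: Network: a stent is modelled by a finite connected graph with vertices $j=1,\dots,n_{\mathcal V}$ and oriented edges $i=1,\dots,n_{\mathcal E}$. $J_j^-$ ($J_j^+$) is the set of edges leaving (entering) vertex $j$. Edge $i$ is a straight segment of length $\ell^i>0$, parametrized as $\Phi^i(s)=\Phi^i(0)+s\,t^i$, $s\in[0,\ell^i]$, with constant unit tangent $t^i$; $s=0$ at the vertex it leaves, $s=\ell^i$ at the vertex it enters. Matrices: $A^+_{I}\in\mathbb{R}^{3n_{\mathcal V}\times 3n_{\mathcal E}}$ has $3\times3$ block $I_3$ in block row $j$, block column $i$ if $i\in J_j^+$ and $0$ otherwise; $A^-_I$ likewise with $J_j^-$. Notation: $P_m(\mathcal N)$ denotes functions that on each edge $[0,\ell^i]$ are real polynomials of degree at most $m$ (no continuity at vertices); $\int_{\mathcal N}v=\sum_i\int_0^{\ell^i}v^i\,ds$. $V_k=P_k(\mathcal N)^3\times P_k(\mathcal N)^3\times(\mathbb{R}^{3n_{\mathcal E}})^4\times\mathbb{R}^3\times\mathbb{R}^3$ with elements $\Sigma=(q,p,P_+,P_-,Q_+,Q_-,\alpha,\beta)$, $M_n=P_n(\mathcal N)^3\times P_n(\mathcal N)^3\times\mathbb{R}^{3n_{\mathcal V}}\times\mathbb{R}^{3n_{\mathcal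 V}}$ with elements $\psi=(v,w,V,W)$. $b(\Sigma,\psi)=\sum_i\int_0^{\ell^i}\big(-p^i\cdot(\partial_sv^i+t^i\times w^i)-q^i\cdot\partial_sw^i\big)ds+\sum_i\big(P^i_+\cdot v^i(\ell^i)-P^i_-\cdot v^i(0)\big)+\sum_i\big(Q^i_+\cdot w^i(\ell^i)-Q^i_-\cdot w^i(0)\big)-(A^+_IP_+-A^-_IP_-)\cdot V-(A^+_IQ_+-A^-_IQ_-)\cdot W+\alpha\cdot\int_{\mathcal N}v+\beta\cdot\int_{\mathcal N}w$. *)

(* Defs.v *)
From HB Require Import structures.
From mathcomp Require Import all_boot all_order all_algebra.
From mathcomp Require Import all_classical all_reals all_analysis.

Set Implicit Arguments.
Unset Strict Implicit.
Unset Printing Implicit Defensive.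
Import Order.TTheory GRing.Theory Num.Theory.
Import numFieldNormedType.Exports.
Local Open Scope ring_scope.

Section StentDefs.
Variable R : realType.

(* vectors of R^3 are row vectors 'rV[R]_3 ;
   R^3-valued polynomials (one polynomial per component) are 'rV[{poly R}]_3 *)
Definition e0 : 'I_3 := inord 0.
Definition e1 : 'I_3 := inord 1.
Definition e2 : 'I_3 := inord 2.

Definition dot3 (a b : 'rV[R]_3) : R := \sum_(c < 3) a ord0 c * b ord0 c.

Definition cross3 (a b : 'rV[R]_3) : 'rV[R]_3 :=
  \row_(k < 3)
    (if k == e0 then a ord0 e1 * b ord0 e2 - a ord0 e2 * b ord0 e1
     else if k == e1 then a ord0 e2 * b ord0 e0 - a ord0 e0 * b ord0 e2
     else a ord0 e0 * b ord0 e1 - a ord0 e1 * b ord0 e0).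

Definition evalv (u : 'rV[{poly R}]_3) (s : R) : 'rV[R]_3 :=
  \row_(c < 3) (u ord0 c).[s].
Definition derivv (u : 'rV[{poly R}]_3) : 'rV[{poly R}]_3 :=
  \row_(c < 3) (u ord0 c)^`().

Definition degle (m : nat) (u : 'rV[{poly R}]_3) : Prop :=
  forall c : 'I_3, (size (u ord0 c) <= m.+1)%N.

Definition int0 (l : R) (f : R -> R) : R :=
  (\int[lebesgue_measure]_(s in `[0%R, l]%classic) f s)%R.

Definition intv (l : R) (u : 'rV[{poly R}]_3) : 'rV[R]_3 :=
  \row_(c < 3) int0 l (fun s => (u ord0 c).[s]).

Definition netint (nE : nat) (len : 'I_nE -> R) (u : 'I_nE -> 'rV[{poly R}]_3)
  : 'rV[R]_3 := \sum_(i < nE) intv (len i) (u i).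

(* Block form of the incidence matrices: a vector of R^{3 nE} (resp. R^{3 nV})
   is a family of blocks in R^3 indexed by edges (resp. vertices).
   (A^+_I P)_j = \sum_{i in J_j^+} P^i,  (A^-_I P)_j = \sum_{i in J_j^-} P^i. *)
Definition Aplus (nV nE : nat) (tgt : 'I_nE -> 'I_nV) (P : 'I_nE -> 'rV[R]_3)
  (j : 'I_nV) : 'rV[R]_3 := \sum_(i < nE | tgt i == j) P i.
Definition Aminus (nV nE : nat) (src : 'I_nE -> 'I_nV) (P : 'I_nE -> 'rV[R]_3)
  (j : 'I_nV) : 'rV[R]_3 := \sum_(i < nE | src i == j) P i.

Definition dotV (nV : nat) (X Y : 'I_nV -> 'rV[R]_3) : R :=
  \sum_(j < nV) dot3 (X j) (Y j).

Definition bform (nV nE : nat) (src tgt : 'I_nE -> 'I_nV)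
  (len : 'I_nE -> R) (t : 'I_nE -> 'rV[R]_3)
  (* Sigma = (q, p, P+, P-, Q+, Q-, alpha, beta) *)
  (q p : 'I_nE -> 'rV[{poly R}]_3) (Pp Pm Qp Qm : 'I_nE -> 'rV[R]_3)
  (alpha beta : 'rV[R]_3)
  (* psi = (v, w, V, W) *)
  (v w : 'I_nE -> 'rV[{poly R}]_3) (V W : 'I_nV -> 'rV[R]_3) : R :=
  \sum_(i < nE) int0 (len i) (fun s =>
      - dot3 (evalv (p i) s) (evalv (derivv (v i)) s + cross3 (t i) (evalv (w i) s))
      - dot3 (evalv (q i) s) (evalv (derivv (w i)) s))
  + \sum_(i < nE) (dot3 (Pp i) (evalv (v i) (len i)) - dot3 (Pm i) (evalv (v i) 0))
  + \sum_(i < nE) (dot3 (Qp i) (evalv (w i) (len i)) - dot3 (Qm i) (evalv (w i) 0))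
  - dotV (fun j => Aplus tgt Pp j - Aminus src Pm j) V
  - dotV (fun j => Aplus tgt Qp j - Aminus src Qm j) W
  + dot3 alpha (netint len v) + dot3 beta (netint len w).

End StentDefs.

Definition adjacent (nV nE : nat) (src tgt : 'I_nE -> 'I_nV) : rel 'I_nV :=
  fun a b => [exists i : 'I_nE,
                ((src i == a) && (tgt i == b)) || ((src i == b) && (tgt i == a))].
Definition graph_connected (nV nE : nat) (src tgt : 'I_nE -> 'I_nV) : Prop :=
  forall a b : 'I_nV, connect (adjacent src tgt) a b.

(* Main.v *)
Require Import Defs.
From HB Require Import structures.
From mathcomp Require Import all_boot all_order all_algebra.
From mathcomp Require Import all_classical all_reals all_analysis.
From mathcomp Require Import lra zify.
From mathcomp Require Import measurable_realfun lebesgue_integral_differentiation.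
Import Order.TTheory GRing.Theory Num.Theory.
Import numFieldNormedType.Exports.
Local Open Scope ring_scope.

Section Pos.
Variable R : realType.

Lemma int0_pos_eq0 (l : R) (f : R -> R) : 0 < l -> continuous f ->
  (forall s, 0 <= f s) -> int0 l f = 0 -> forall x, 0 < x -> x < l -> f x = 0.
Proof.
move=> l0 cf f0 H x x0 xl.
apply/eqP; rewrite eq_le f0 andbT; apply/negP => /negP; rewrite -ltNge => fx0.
have hx : f x / 2 < f x by rewrite ltr_pdivrMr // ltr_pMr // ltr1n.
have [e /= e0 He] : nbhs_ball x (fun y => f x / 2 < f y).
  by apply/nbhs_ballP; exact: (cvgr_gt (f x) (cf x) _ hx).
pose e' := Num.min (e / 2) (Num.min (x / 2) ((l - x) / 2)).
have e'0 : 0 < e'.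
  by rewrite /e' !lt_min !divr_gt0 // subr_gt0.
have e'e : e' < e.
  by rewrite /e' gt_min; apply/orP; left; rewrite ltr_pdivrMr // ltr_pMr // ltr1n.
have e'x : e' < x.
  rewrite /e' !gt_min; apply/orP; right; apply/orP; left.
  by rewrite ltr_pdivrMr // ltr_pMr // ltr1n.
have e'lx : e' < l - x.
  rewrite /e' !gt_min; apply/orP; right; apply/orP; right.
  by rewrite ltr_pdivrMr // ?ltr_pMr // ?ltr1n // subr_gt0.
have Jsub : (`[x - e', x + e'] `<=` `[0, l])%classic.
  move=> y /=; rewrite !in_itv /= => /andP [h1 h2].
  apply/andP; split; lra.
have fJ : forall y, `[x - e', x + e']%classic y -> f x / 2 < f y.
  move=> y /=; rewrite in_itv /= => /andP [h1 h2].
  apply: He => /=; rewrite -ball_normE /ball_ /=.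
  apply: le_lt_trans e'e.
  rewrite ler_norml; apply/andP; split; lra.
have mf : measurable_fun [set: R] (fun y => (f y)%:E).
  by apply/measurable_EFinP; exact: continuous_measurable_fun.
have mf' : @measurable_fun _ _ (measurableTypeR R) _ setT (fun y => (f y)%:E) := mf.
have intf : lebesgue_measure.-integrable `[0, l] (EFin \o f).
  apply: continuous_compact_integrable; first exact: segment_compact.
  exact: continuous_subspaceT.
have fin : (\int[lebesgue_measure]_(y in `[0%R, l]%classic) (f y)%:E)%E \is a fin_num.
  by apply: integrable_fin_num intf.
have I0 : (\int[lebesgue_measure]_(y in `[0%R, l]%classic) (f y)%:E = 0)%E.
  by rewrite -(fineK fin); move: H; rewrite /int0 /Rintegral => ->.
have : ((f x / 2)%:E * lebesgue_measure (`[(x - e')%R, (x + e')%R]%classic) <=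
        \int[lebesgue_measure]_(y in `[0%R, l]%classic) (f y)%:E)%E.
  rewrite -integral_cst; last exact: measurable_itv.
  apply: (@le_trans _ _ (\int[lebesgue_measure]_(y in `[(x - e')%R, (x + e')%R]%classic) (f y)%:E)%E).
    apply: ge0_le_integral => //.
    - by move=> y _; rewrite /= lee_fin divr_ge0.
    - exact: measurable_funTS mf'.
    - by move=> y /fJ /ltW; rewrite lee_fin.
  apply: ge0_subset_integral => //.
  - exact: measurable_funTS mf'.
  - by move=> y _; rewrite lee_fin.
rewrite I0 lebesgue_measure_itv /= lte_fin ifT; last by lra.
rewrite -EFinD -EFinM lee_fin leNgt => /negP; apply.
by rewrite mulr_gt0 ?divr_gt0 //; lra.
Qed.

Lemma mul_self_ge0 (x : R) : 0 <= x * x.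
Proof. by rewrite -expr2 sqr_ge0. Qed.

Lemma dot3E (a b : 'rV[R]_3) : dot3 a b = \sum_(c < 3) a ord0 c * b ord0 c.
Proof. by []. Qed.

Lemma dot30l (b : 'rV[R]_3) : dot3 0 b = 0.
Proof. by rewrite /dot3 big1 // => c _; rewrite mxE mul0r. Qed.

Lemma dot30r (b : 'rV[R]_3) : dot3 b 0 = 0.
Proof. by rewrite /dot3 big1 // => c _; rewrite mxE mulr0. Qed.

Lemma dot3Nl (a b : 'rV[R]_3) : dot3 (- a) b = - dot3 a b.
Proof. by rewrite /dot3 -sumrN; apply: eq_bigr => c _; rewrite mxE mulNr. Qed.

Lemma dot3Br (a b c : 'rV[R]_3) : dot3 a (b - c) = dot3 a b - dot3 a c.
Proof.
rewrite /dot3 -sumrB; apply: eq_bigr => i _; rewrite !mxE mulrBr //.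
Qed.

Lemma dot3_suml (I : eqType) (r : seq I) (P : pred I) (F : I -> 'rV[R]_3) b :
  dot3 (\sum_(i <- r | P i) F i) b = \sum_(i <- r | P i) dot3 (F i) b.
Proof.
rewrite /dot3 (exchange_big) /=; apply: eq_bigr => c _.
by rewrite summxE mulr_suml.
Qed.

Lemma dot3_ge0 (a : 'rV[R]_3) : 0 <= dot3 a a.
Proof. by rewrite /dot3 sumr_ge0 // => c _; rewrite mul_self_ge0. Qed.

Lemma dot3_eq0 (a : 'rV[R]_3) : dot3 a a = 0 -> a = 0.
Proof.
move=> h; apply/rowP => c; rewrite mxE.
have := @psumr_eq0P _ _ xpredT _ (fun c _ => mul_self_ge0 (a ord0 c)) h c isT.
by move/eqP; rewrite mulf_eq0 orbb => /eqP; rewrite (ord1 0).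
Qed.

Lemma sumsq0 (nE : nat) (d : 'I_nE -> 'rV[R]_3) :
  \sum_i dot3 (d i) (d i) = 0 -> forall i, d i = 0.
Proof.
move=> h i; apply: dot3_eq0.
exact: (@psumr_eq0P _ _ xpredT _ (fun i _ => dot3_ge0 (d i)) h i isT).
Qed.

Lemma evalv0 s : evalv (0 : 'rV[{poly R}]_3) s = 0.
Proof. by apply/rowP => c; rewrite !mxE horner0. Qed.

Lemma evalvN (u : 'rV[{poly R}]_3) s : evalv (- u) s = - evalv u s.
Proof. by apply/rowP => c; rewrite !mxE hornerN. Qed.

Lemma cross30 (a : 'rV[R]_3) : cross3 a 0 = 0.
Proof. by apply/rowP => c; rewrite !mxE !mulr0 !subrr !if_same. Qed.

Lemma dotV_A (nV nE : nat) (src tgt : 'I_nE -> 'I_nV) (P Q : 'I_nE -> 'rV[R]_3)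
  (U : 'I_nV -> 'rV[R]_3) :
  dotV (fun j => Aplus tgt P j - Aminus src Q j) U =
  \sum_i dot3 (P i) (U (tgt i)) - \sum_i dot3 (Q i) (U (src i)).
Proof.
rewrite /dotV /Aplus /Aminus.
have E : forall (f : 'I_nE -> 'I_nV) (F : 'I_nE -> 'rV[R]_3),
   \sum_(j < nV) dot3 (\sum_(i < nE | f i == j) F i) (U j) =
   \sum_i dot3 (F i) (U (f i)).
  move=> f F.
  under eq_bigr => j _ do rewrite dot3_suml.
  rewrite (exchange_big_dep xpredT) //=.
  apply: eq_bigr => i _.
  by rewrite (big_pred1 (f i)) // => j; rewrite eq_sym.
rewrite -!E -sumrB; apply: eq_bigr => j _.
rewrite /dot3 -sumrB; apply: eq_bigr => c _; rewrite !mxE mulrBl //.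
Qed.

Lemma deriv0_const (p : {poly R}) : p^`() = 0 -> p = (p.[0])%:P.
Proof.
move=> h; rewrite horner_coef0; apply/polyP => i; rewrite coefC.
case: i => [|i] //=.
have := congr1 (fun q : {poly R} => q`_i) h; rewrite /= coef_deriv coef0.
by move/eqP; rewrite mulrn_eq0 /= => /eqP.
Qed.

Lemma poly_roots0 (r : {poly R}) (l : R) : 0 < l ->
  (forall x, 0 < x -> x < l -> r.[x] = 0) -> r = 0.
Proof.
move=> l0 h; apply/eqP; apply/negPn/negP => rn0.
pose rs := [seq l / (i.+2)%:R | i <- iota 0 (size r)].
have := @max_poly_roots _ r rs rn0.
rewrite size_map size_iota ltnn => H; suff : false by []; apply: H.
- apply/allP => x /mapP [i _ ->]; apply/rootP; apply: h.
    by rewrite divr_gt0 // ltr0n.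
  by rewrite ltr_pdivrMr ?ltr0n // ltr_pMr // ltr1n.
- rewrite map_inj_uniq ?iota_uniq // => a b.
  move/(mulfI (lt0r_neq0 l0))/invr_inj/eqP.
  by rewrite eqr_nat !eqSS => /eqP.
Qed.

Lemma key_int (l : R) (u : 'rV[{poly R}]_3) : 0 < l ->
  int0 l (fun s => dot3 (evalv u s) (evalv u s)) = 0 -> u = 0.
Proof.
move=> l0 h.
pose P := \sum_(c < 3) u ord0 c * u ord0 c.
have fE : (fun s => dot3 (evalv u s) (evalv u s)) = horner P.
  apply: funext => s; rewrite /P horner_sum /dot3.
  by apply: eq_bigr => c _; rewrite !mxE hornerM.
have H : forall x, 0 < x -> x < l ->
    (fun s => dot3 (evalv u s) (evalv u s)) x = 0.
  move=> x x0 xl; apply: (@int0_pos_eq0 l _ l0 _ _ h) => //.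
    rewrite fE; exact: continuous_horner.
  by move=> s; exact: dot3_ge0.
apply/rowP => c; rewrite mxE.
apply: (@poly_roots0 _ l l0) => x x0 xl.
have := H x x0 xl => /dot3_eq0 /rowP /(_ c).
by rewrite !mxE => E; exact: E.
Qed.

Lemma int0_cst (l a : R) : 0 <= l -> int0 l (fun _ => a) = a * l.
Proof.
move=> l0; rewrite /int0 Rintegral_cst //= lebesgue_measure_itv /= lte_fin.
case: ltP => [_|]; first by rewrite -EFinD /= subr0.
by move=> ll; have -> : l = 0 by apply/eqP; rewrite eq_le ll l0.
Qed.


Lemma finish (nV nE : nat) (src tgt : 'I_nE -> 'I_nV) (len : 'I_nE -> R)
  (u : 'I_nE -> 'rV[{poly R}]_3) (U : 'I_nV -> 'rV[R]_3) :
  (0 < nE)%N -> graph_connected src tgt -> (forall i, 0 < len i) ->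
  (forall i, derivv (u i) = 0) ->
  (forall i, evalv (u i) 0 = U (src i)) ->
  (forall i, evalv (u i) (len i) = U (tgt i)) ->
  netint len u = 0 -> (forall i, u i = 0) /\ (forall j, U j = 0).
Proof.
move=> nE0 conn len0 du u0 ul nint.
have uC : forall i c, u i ord0 c = ((U (src i)) ord0 c)%:P.
  move=> i c; rewrite -u0 mxE.
  apply: deriv0_const.
  by have := congr1 (fun M : 'rV[{poly R}]_3 => M ord0 c) (du i); rewrite /= mxE mxE.
have ev : forall i s, evalv (u i) s = U (src i).
  by move=> i s; apply/rowP => c; rewrite mxE uC hornerC.
have UE : forall i, U (tgt i) = U (src i) by move=> i; rewrite -ul ev.
pose i0 : 'I_nE := Ordinal nE0.
have Uc : forall j, U j = U (src i0).
  move=> j; have := conn (src i0) j => /connectP [p pth ->].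
  elim: p (src i0) pth => //= x p IH a /andP [eax pth].
  rewrite IH //.
  move: eax => /existsP [i /orP [] /andP [/eqP <- /eqP <-]].
    by rewrite UE.
  by rewrite UE.
pose c := U (src i0).
have c0 : c = 0.
  apply/rowP => k; rewrite mxE.
  have := congr1 (fun M : 'rV[R]_3 => M ord0 k) nint.
  rewrite /netint summxE mxE.
  under eq_bigr => i _.
    rewrite mxE.
    have -> : (fun s => (u i ord0 k).[s]) = (fun _ => c ord0 k).
      by apply: funext => s; rewrite uC hornerC /c (Uc (src i)).
    rewrite int0_cst; last exact: ltW.
  over.
  rewrite -mulr_sumr => /eqP; rewrite mulf_eq0 => /orP [/eqP //|].
  move=> /eqP hs; exfalso.
  have : 0 < \sum_i len i.
    rewrite (bigD1 i0) //=; apply: ltr_wpDr; last exact: len0.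
    by apply: sumr_ge0 => i _; exact: ltW.
  by rewrite hs ltxx.
split.
  by move=> i; apply/rowP => k; rewrite uC Uc -/c c0 !mxE.
by move=> j; rewrite Uc -/c c0.
Qed.


Lemma int0_ext (l : R) (f g : R -> R) : (forall s, f s = g s) -> int0 l f = int0 l g.
Proof. by move=> fg; congr int0; apply: funext. Qed.

Lemma sum_dot3Br (nE : nat) (P a b : 'I_nE -> 'rV[R]_3) :
  \sum_i dot3 (P i) (a i - b i) = \sum_i dot3 (P i) (a i) - \sum_i dot3 (P i) (b i).
Proof. by rewrite -sumrB; apply: eq_bigr => i _; rewrite dot3Br. Qed.

Lemma bformE (nV nE : nat) (src tgt : 'I_nE -> 'I_nV) len t q p
  (Pp Pm Qp Qm : 'I_nE -> 'rV[R]_3) alpha beta v w V W :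
  bform src tgt len t q p Pp Pm Qp Qm alpha beta v w V W =
  \sum_(i < nE) int0 (len i) (fun s =>
      - dot3 (evalv (p i) s) (evalv (derivv (v i)) s + cross3 (t i) (evalv (w i) s))
      - dot3 (evalv (q i) s) (evalv (derivv (w i)) s))
  + (\sum_i dot3 (Pp i) (evalv (v i) (len i) - V (tgt i))
     - \sum_i dot3 (Pm i) (evalv (v i) 0 - V (src i)))
  + (\sum_i dot3 (Qp i) (evalv (w i) (len i) - W (tgt i))
     - \sum_i dot3 (Qm i) (evalv (w i) 0 - W (src i)))
  + dot3 alpha (netint len v) + dot3 beta (netint len w).
Proof.
rewrite /bform !dotV_A !sum_dot3Br !sumrB.
set a1 := \sum_(i < nE) int0 _ _.
lra.
Qed.


Lemma int0_ge0 (l : R) (f : R -> R) : (forall s, 0 <= f s) -> 0 <= int0 l f.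
Proof. by move=> f0; apply: Rintegral_ge0 => x _; exact: f0. Qed.

Lemma degle_Nderiv (n k : nat) (u : 'rV[{poly R}]_3) :
  (1 <= n)%N -> (n.-1 <= k)%N -> degle n u -> degle k (- derivv u).
Proof.
move=> n1 nk du c; rewrite !mxE size_polyN.
have := du c; case: (eqVneq (u ord0 c) 0) => [->|nz]; first by rewrite deriv0 size_poly0.
move=> hs; have := lt_size_deriv nz; move: nk hs; case: (n) n1 => // n0 _ /= nk hs h2.
have h3 : (size (u ord0 c)^`() <= n0.+1)%N by rewrite -ltnS; exact: leq_trans h2 hs.
by apply: leq_trans h3 _; rewrite ltnS.
Qed.

Lemma degle0 (k : nat) : degle k (0 : 'rV[{poly R}]_3).
Proof. by move=> c; rewrite mxE size_poly0. Qed.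

End Pos.

Theorem lemma4p2 (R : realType) (nV nE : nat)
  (src tgt : 'I_nE -> 'I_nV)          (* edge i leaves src i, enters tgt i *)
  (len : 'I_nE -> R) (t : 'I_nE -> 'rV[R]_3)
  (X : 'I_nV -> 'rV[R]_3)             (* vertex positions *)
  (n k : nat) :
  (0 < nE)%N ->
  graph_connected src tgt ->
  (forall i, 0 < len i) ->
  (forall i, dot3 (t i) (t i) = 1) ->
  (* straight strut: Phi^i(s) = Phi^i(0) + s t^i, from vertex src i to tgt i *)
  (forall i, X (tgt i) = X (src i) + len i *: t i) ->
  (1 <= n)%N -> (n.-1 <= k)%N ->
  forall (v w : 'I_nE -> 'rV[{poly R}]_3) (V W : 'I_nV -> 'rV[R]_3),
  (forall i, degle n (v i)) -> (forall i, degle n (w i)) ->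
  (forall (q p : 'I_nE -> 'rV[{poly R}]_3) (Pp Pm Qp Qm : 'I_nE -> 'rV[R]_3)
          (alpha beta : 'rV[R]_3),
     (forall i, degle k (q i)) -> (forall i, degle k (p i)) ->
     bform src tgt len t q p Pp Pm Qp Qm alpha beta v w V W = 0) ->
  (forall i, v i = 0) /\ (forall i, w i = 0) /\
  (forall j, V j = 0) /\ (forall j, W j = 0).
Proof.
move=> nE0 conn len0 _ _ n1 nk v w V W dv dw H.
pose Zp : 'I_nE -> 'rV[{poly R}]_3 := fun _ => 0.
pose Z : 'I_nE -> 'rV[R]_3 := fun _ => 0.
have dZ : forall i, degle k (Zp i) by move=> i; exact: degle0.
have S0 : forall F : 'I_nE -> 'rV[R]_3, \sum_i dot3 (Z i) (F i) = 0.
  by move=> F; apply: big1 => i _; exact: dot30l.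
have IZ : forall q : 'I_nE -> 'rV[{poly R}]_3, \sum_i int0 (len i) (fun s =>
      - dot3 (evalv (Zp i) s) (evalv (derivv (v i)) s + cross3 (t i) (evalv (w i) s))
      - dot3 (evalv (Zp i) s) (evalv (derivv (w i)) s)) = 0.
  move=> _; apply: big1 => i _.
  rewrite (@int0_ext _ _ _ (fun _ => 0)) ?int0_cst ?mul0r //; first exact: ltW.
  by move=> s; rewrite evalv0 !dot30l subr0 oppr0.
have sq := @sumsq0 R nE.
have bv1 : forall i, evalv (v i) (len i) = V (tgt i).
  have := H Zp Zp (fun i => evalv (v i) (len i) - V (tgt i)) Z Z Z 0 0 dZ dZ.
  rewrite bformE IZ // !S0 !dot30l => h.
  have /sq h' : \sum_i dot3 (evalv (v i) (len i) - V (tgt i)) (evalv (v i) (len i) - V (tgt i)) = 0.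
    by move: h; rewrite !subr0 !addr0 !add0r.
  by move=> i; apply/eqP; rewrite -subr_eq0; apply/eqP; exact: h'.
have bv0 : forall i, evalv (v i) 0 = V (src i).
  have := H Zp Zp Z (fun i => - (evalv (v i) 0 - V (src i))) Z Z 0 0 dZ dZ.
  rewrite bformE IZ // !S0 !dot30l => h.
  have /sq h' : \sum_i dot3 (evalv (v i) 0 - V (src i)) (evalv (v i) 0 - V (src i)) = 0.
    move: h; under eq_bigr => i _ do rewrite dot3Nl.
    by rewrite sumrN opprK !subr0 !addr0 !add0r.
  by move=> i; apply/eqP; rewrite -subr_eq0; apply/eqP; exact: h'.
have bw1 : forall i, evalv (w i) (len i) = W (tgt i).
  have := H Zp Zp Z Z (fun i => evalv (w i) (len i) - W (tgt i)) Z 0 0 dZ dZ.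
  rewrite bformE IZ // !S0 !dot30l => h.
  have /sq h' : \sum_i dot3 (evalv (w i) (len i) - W (tgt i)) (evalv (w i) (len i) - W (tgt i)) = 0.
    by move: h; rewrite !subr0 !addr0 !add0r.
  by move=> i; apply/eqP; rewrite -subr_eq0; apply/eqP; exact: h'.
have bw0 : forall i, evalv (w i) 0 = W (src i).
  have := H Zp Zp Z Z Z (fun i => - (evalv (w i) 0 - W (src i))) 0 0 dZ dZ.
  rewrite bformE IZ // !S0 !dot30l => h.
  have /sq h' : \sum_i dot3 (evalv (w i) 0 - W (src i)) (evalv (w i) 0 - W (src i)) = 0.
    move: h; under eq_bigr => i _ do rewrite dot3Nl.
    by rewrite sumrN opprK !subr0 !addr0 !add0r.
  by move=> i; apply/eqP; rewrite -subr_eq0; apply/eqP; exact: h'.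
have dw0 : forall i, derivv (w i) = 0.
  have := H (fun i => - derivv (w i)) Zp Z Z Z Z 0 0
    (fun i => @degle_Nderiv R n k (w i) n1 nk (dw i)) dZ.
  rewrite bformE !S0 !dot30l.
  rewrite (eq_bigr (fun i => int0 (len i) (fun s =>
      dot3 (evalv (derivv (w i)) s) (evalv (derivv (w i)) s)))); last first.
    move=> i _; apply: int0_ext => s.
    by rewrite evalv0 evalvN dot30l dot3Nl oppr0 sub0r opprK.
  rewrite !subr0 !addr0 => h i.
  apply: (@key_int _ (len i)) => //.
  apply: (@psumr_eq0P _ _ xpredT _ _ h i isT) => j _.
  by apply: int0_ge0 => s; exact: dot3_ge0.
have nw : netint len w = 0.
  have := H Zp Zp Z Z Z Z 0 (netint len w) dZ dZ.
  rewrite bformE IZ // !S0 !dot30l !subr0 !addr0 !add0r.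
  exact: dot3_eq0.
have [w0 W0] := @finish R _ _ _ _ _ _ _ nE0 conn len0 dw0 bw0 bw1 nw.
have dv0 : forall i, derivv (v i) = 0.
  have := H Zp (fun i => - derivv (v i)) Z Z Z Z 0 0 dZ
    (fun i => @degle_Nderiv R n k (v i) n1 nk (dv i)).
  rewrite bformE !S0 !dot30l.
  rewrite (eq_bigr (fun i => int0 (len i) (fun s =>
      dot3 (evalv (derivv (v i)) s) (evalv (derivv (v i)) s)))); last first.
    move=> i _; apply: int0_ext => s.
    by rewrite w0 evalv0 cross30 addr0 evalvN dot30l dot3Nl subr0 opprK.
  rewrite !subr0 !addr0 => h i.
  apply: (@key_int _ (len i)) => //.
  apply: (@psumr_eq0P _ _ xpredT _ _ h i isT) => j _.
  by apply: int0_ge0 => s; exact: dot3_ge0.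
have nv : netint len v = 0.
  have := H Zp Zp Z Z Z Z (netint len v) 0 dZ dZ.
  rewrite bformE IZ // !S0 !dot30l !subr0 !addr0 !add0r.
  exact: dot3_eq0.
have [v0 V0] := @finish R _ _ _ _ _ _ _ nE0 conn len0 dv0 bv0 bv1 nv.
by [].
Qed.
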